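(* Let $M$ be a sharp toric monoid, $\mathfrak p\subset M$ a prime ideal of height $1$, and $F=M\setminus\mathfrak p$ the corresponding facet. The following are equivalent: (a) $F$ splits off (there is a face $K$ with $F\oplus K\to M$ an isomorphism); (b) the ideal $(F^+)=F^++M$ is prime and $\operatorname{ht}((F^+))\ge\operatorname{rk}(M)-1$; (c) $(F^+)$ is prime and there is at most one edge of $M$ not contained in $F$; (d) $(F^+)$ equals the union of all prime ideals of $M$ of height $1$ different from $\mathfrak p$; (e) $\mathfrak p$ is principal, i.e. $\mathfrak p=e+M$ for some $e\in M$. Moreover, if these conditions hold then $M=F\oplus\mathbb N e$, where $e$ is a generator of $\mathfrak p$, and $\mathbb N e$ is the only edge of $M$ not contained in $F$.
   Context: Monoids are commutative. For a monoid $M$: $M^\times$ its units, $M^{gp}$ its Grothendieck group, $\operatorname{rk}(M)=\dim_{\mathbb Q}(M^{gp}\otimes\mathbb Q)$; $M$ is sharp if $M^\times=\{0\}$. A toric monoid is a fine saturated monoid with torsion-free Grothendieck group. For a face $F$, $F^+=F\setminus F^\times$. An ideal $I\subseteq M$ satisfies $I+M\subseteq I$; it is prime if $M\setminus I$ is a submonoid (hence a face). For a prime $\mathfrak p$ of a toric monoid, $\operatorname{ht}(\mathfrak p)=\operatorname{rk}(M)-\operatorname{rk}(M\setminus\mathfrak p)$; height-one primes correspond to facets. An edge is a face of rank $1$. *)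

(* Defs.v *)
From HB Require Import structures.
From mathcomp Require Import all_boot all_order all_algebra.
From Stdlib Require Import ClassicalEpsilon.
Set Implicit Arguments. Unset Strict Implicit. Unset Printing Implicit Defensive.
Import GRing.Theory.
Local Open Scope ring_scope.

Section Monoids.
Variable M : nmodType.

Definition integral_monoid : Prop := forall x y z : M, x + y = x + z -> y = z.

Definition fin_gen : Prop :=
  exists (n : nat) (g : 'I_n -> M),
    forall x : M, exists a : 'I_n -> nat, x = \sum_(i < n) (g i *+ a i).

Definition fine_monoid : Prop := integral_monoid /\ fin_gen.

(* saturated: if n(a - b) lies in M (i.e. n a = n b + c with c in M) for some
   n >= 1, then a - b lies in M (i.e. a = b + d with d in M). *)
Definition saturated_monoid : Prop :=
  forall (a b c : M) (n : nat), (0 < n)%N -> a *+ n = b *+ n + c ->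
    exists d : M, a = b + d.

(* M^gp torsion free: n (a - b) = 0 in M^gp with n >= 1 implies a - b = 0. *)
Definition gp_torsion_free : Prop :=
  forall (a b : M) (n : nat), (0 < n)%N -> a *+ n = b *+ n -> a = b.

Definition toric_monoid : Prop :=
  [/\ fine_monoid, saturated_monoid & gp_torsion_free].

Definition is_unit (x : M) : Prop := exists y : M, x + y = 0.

Definition sharp_monoid : Prop := forall x : M, is_unit x -> x = 0.

Definition submonoid (S : M -> Prop) : Prop :=
  S 0 /\ forall x y, S x -> S y -> S (x + y).

Definition face (F : M -> Prop) : Prop :=
  submonoid F /\ forall x y : M, F (x + y) -> F x /\ F y.

Definition ideal (I : M -> Prop) : Prop := forall x y : M, I x -> I (x + y).

Definition prime_ideal (I : M -> Prop) : Prop :=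
  ideal I /\ submonoid (fun x => ~ I x).

Definition face_plus (F : M -> Prop) (x : M) : Prop :=
  F x /\ ~ (exists y : M, F y /\ x + y = 0).

Definition gen_ideal (S : M -> Prop) (x : M) : Prop :=
  exists s m : M, S s /\ x = s + m.

(* Linear independence of f_0..f_{k-1} in M^gp (x) Q: every (torsion) integral
   relation, written with nat coefficients on both sides, is trivial. *)
Definition gp_Q_independent (k : nat) (f : 'I_k -> M) : Prop :=
  forall (a b : 'I_k -> nat) (n : nat), (0 < n)%N ->
    (\sum_(i < k) (f i *+ a i)) *+ n = (\sum_(i < k) (f i *+ b i)) *+ n ->
    forall i, a i = b i.

(* r is the rank of the submonoid S, i.e. dim_Q (S^gp (x) Q), computed inside
   M^gp (x) Q: the maximal size of a Q-independent family of elements of S. *)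
Definition is_rank (S : M -> Prop) (r : nat) : Prop :=
  (exists f : 'I_r -> M, (forall i, S (f i)) /\ gp_Q_independent f) /\
  (forall (k : nat) (f : 'I_k -> M),
      (forall i, S (f i)) -> gp_Q_independent f -> (k <= r)%N).

Definition rank (S : M -> Prop) : nat := epsilon (inhabits 0%N) (is_rank S).

Definition rk : nat := rank (fun _ => True).

Definition height (P : M -> Prop) : nat := (rk - rank (fun x => ~ P x))%N.

Definition edge (E : M -> Prop) : Prop := face E /\ rank E = 1%N.

Definition subset_of (A B : M -> Prop) : Prop := forall x, A x -> B x.
Definition same_set (A B : M -> Prop) : Prop := forall x, A x <-> B x.

(* F splits off: there is a face K with F (+) K -> M, (f,k) |-> f + k, an
   isomorphism (it is always a monoid morphism; we require bijectivity). *)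
Definition splits_off (F : M -> Prop) : Prop :=
  exists K : M -> Prop, face K /\
    (forall x : M, exists f k : M, [/\ F f, K k & x = f + k]) /\
    (forall f k f' k' : M, F f -> K k -> F f' -> K k' ->
        f + k = f' + k' -> f = f' /\ k = k').

Definition nat_mults (e : M) (x : M) : Prop := exists n : nat, x = e *+ n.

End Monoids.

(* Main.v *)
Require Import Defs.
From HB Require Import structures.
From mathcomp Require Import all_boot all_order all_algebra.
From mathcomp Require Import zify ring ssrAC.
From Stdlib Require Import Classical ClassicalEpsilon.
Set Implicit Arguments. Unset Strict Implicit. Unset Printing Implicit Defensive.
Import GRing.Theory.
Local Open Scope ring_scope.
Import Order.TTheory Num.Theory.

Lemma int_kernel (I : finType) (N : nat) : forall (A : {set I}) (C : I -> nat -> int),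
  (N < #|A|)%N ->
  exists w : I -> int, [/\ exists2 i, i \in A & w i != 0,
     forall i, i \notin A -> w i = 0 &
     forall j, (j < N)%N -> \sum_(i in A) w i * C i j = 0].
Proof.
elim: N => [|N IH] A C HA.
  have [i iA] : exists i, i \in A.
    by apply/set0Pn; rewrite -card_gt0.
  exists (fun x => if x == i then 1 else 0); split => //.
  - by exists i => //; rewrite eqxx.
  - by move=> x xA; case: eqP => // Hx; rewrite Hx iA in xA.
case: (boolP [forall i in A, C i N == 0]) => [/forall_inP Hz | /forall_inPn [i0 i0A Hc]].
  have HA' : (N < #|A|)%N by apply: ltnW.
  have [w [[i iA wi] wout wsum]] := IH A C HA'.
  exists w; split => //; first by exists i.
  move=> j; rewrite ltnS leq_eqVlt => /orP [/eqP -> | /wsum //].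
  by rewrite big1 // => x xA; rewrite (eqP (Hz x xA)) mulr0.
set c0 := C i0 N.
pose C' := fun i j => c0 * C i j - C i N * C i0 j.
have HA' : (N < #|A :\ i0|)%N.
  by move: HA; rewrite (cardsD1 i0 A) i0A add1n ltnS.
have [w' [[i1 i1A w'i1] w'out w'sum]] := IH (A :\ i0) C' HA'.
exists (fun i => if i == i0 then - \sum_(x in A :\ i0) w' x * C x N else c0 * w' i).
split.
- exists i1; first by move: i1A; rewrite in_setD1 => /andP [].
  move: i1A; rewrite in_setD1 => /andP [/negbTE -> _].
  by rewrite mulf_neq0.
- move=> i iA; case: eqP => [Hi | _]; first by rewrite Hi i0A in iA.
  rewrite w'out ?mulr0 //; by rewrite in_setD1 negb_and iA orbT.
move=> j Hj.
rewrite (bigD1 i0) //= eqxx.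
have -> : \sum_(i in A | i != i0) (if i == i0 then - \sum_(x in A :\ i0) w' x * C x N
          else c0 * w' i) * C i j = \sum_(i in A :\ i0) c0 * w' i * C i j.
  rewrite [RHS](eq_bigl (fun i => (i \in A) && (i != i0))); last first.
    by move=> i; rewrite in_setD1 andbC.
  by apply: eq_bigr => i /andP [_ /negbTE ->].
rewrite mulNr mulr_suml addrC -sumrB.
have E: forall i, c0 * w' i * C i j - w' i * C i N * C i0 j = w' i * C' i j.
  by move=> i; rewrite /C'; ring.
under eq_bigr do rewrite E.
move: Hj; rewrite ltnS leq_eqVlt => /orP [/eqP -> | Hj].
  by rewrite big1 // => i _; rewrite /C'; rewrite /c0; ring.
exact: w'sum.
Qed.

Section MLA.
Variable M : nmodType.
Hypothesis Hint : integral_monoid M.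

Definition spanned (N : nat) (h : 'I_N -> M) (x : M) : Prop :=
  exists (d : nat) (a b : 'I_N -> nat), (0 < d)%N /\
    x *+ d + \sum_(j < N) h j *+ a j = \sum_(j < N) h j *+ b j.

Lemma exch_sum k N (h : 'I_N -> M) (a : 'I_k -> 'I_N -> nat) (P : 'I_k -> nat) :
  \sum_(i < k) (\sum_(j < N) h j *+ a i j) *+ P i =
  \sum_(j < N) h j *+ (\sum_(i < k) (a i j * P i)%N).
Proof.
under eq_bigr do rewrite -sumrMnl.
rewrite exchange_big /=; apply: eq_bigr => j _.
rewrite -sumrMnr; apply: eq_bigr => i _; by rewrite mulrnA.
Qed.

Lemma span_bound k N (f : 'I_k -> M) (h : 'I_N -> M) :
  (forall i, spanned h (f i)) -> gp_Q_independent f -> (k <= N)%N.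
Proof.
move=> Hs Hind; rewrite leqNgt; apply/negP => HNk.
have [d Hd] := fin_all_exists Hs.
have [a Ha] := fin_all_exists Hd.
have [b Hb] := fin_all_exists Ha.
pose C := fun (i : 'I_k) (j : nat) =>
  oapp (fun j' : 'I_N => (b i j')%:Z - (a i j')%:Z) 0 (insub j).
have Hk : (N < #|[set: 'I_k]|)%N by rewrite cardsT card_ord.
have [w [[i1 _ wi1] _ wsum]] := @int_kernel _ N [set: 'I_k] C Hk.
pose P := fun i => if (0 <= w i) then `|w i|%N else 0%N.
pose Q := fun i => if (w i < 0) then `|w i|%N else 0%N.
have wPQ : forall i, w i = (P i)%:Z - (Q i)%:Z.
  move=> i; rewrite /P /Q; case: (lerP 0 (w i)) => H.
    by rewrite gez0_abs // subr0.
  have := ltW H; lia.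
have key : forall j : 'I_N,
  (\sum_(i < k) (b i j * P i) + \sum_(i < k) (a i j * Q i) =
   \sum_(i < k) (b i j * Q i) + \sum_(i < k) (a i j * P i))%N.
  move=> j; apply/eqP; rewrite -(eqr_nat int) !natrD !natr_sum.
  rewrite -subr_eq0.
  have E := wsum j (ltn_ord j).
  rewrite (eq_bigl xpredT) in E; last by move=> i /=; rewrite inE.
  apply/eqP; rewrite -[RHS]E -!big_split /= -sumrB; apply: eq_bigr => i _.
  rewrite /C /= valK /= wPQ !natrM; ring.
set A := fun i => \sum_(j < N) h j *+ a i j.
set B := fun i => \sum_(j < N) h j *+ b i j.
have eqP' : forall (R : 'I_k -> nat),
   \sum_(i < k) f i *+ (d i * R i)%N + \sum_(i < k) A i *+ R i = \sum_(i < k) B i *+ R i.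
  move=> R; rewrite -big_split /=; apply: eq_bigr => i _.
  rewrite /A /B; have [_ <-] := Hb i.
  by rewrite mulrnDl mulrnA.
set X := \sum_(i < k) f i *+ (d i * P i)%N.
set Y := \sum_(i < k) f i *+ (d i * Q i)%N.
have HXY : X = Y.
  set SAP := \sum_(i < k) A i *+ P i.
  set SAQ := \sum_(i < k) A i *+ Q i.
  set SBP := \sum_(i < k) B i *+ P i.
  set SBQ := \sum_(i < k) B i *+ Q i.
  have e1 : SAP + SAQ + X = SAQ + SBP.
    by rewrite /SBP -(eqP' P) -/X -/SAP [SAP + SAQ]addrC -addrA [SAP + X]addrC.
  have e2 : SAP + SAQ + Y = SAP + SBQ.
    by rewrite /SBQ -(eqP' Q) -/Y -/SAQ -addrA [SAQ + Y]addrC.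
  have e3 : SAQ + SBP = SAP + SBQ.
    rewrite /SAQ /SBP /SAP /SBQ /A /B !exch_sum -!big_split /=; apply: eq_bigr => j _.
    by rewrite -!mulrnDr addnC key addnC.
  apply: (Hint (x := SAP + SAQ)); by rewrite e1 e2.
have := Hind (fun i => d i * P i)%N (fun i => d i * Q i)%N 1%N isT.
rewrite !mulr1n => /(_ HXY i1) /eqP.
have [dpos _] := Hb i1.
rewrite eqn_mul2l (negbTE (lt0n_neq0 dpos)) /= /P /Q.
case: (lerP 0 (w i1)) => H.
  by move=> /eqP E; move: wi1; rewrite -absz_eq0 E.
by move=> /eqP E; move: wi1; rewrite -absz_eq0 -E.
Qed.
End MLA.

Section Rank.
Variable M : nmodType.
Hypothesis Hint : integral_monoid M.

Lemma cancelr (x y z : M) : y + x = z + x -> y = z.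
Proof. by rewrite ![_ + x]addrC => /Hint. Qed.

Definition ext n (f : 'I_n -> M) (y : M) (i : 'I_n.+1) : M :=
  match unlift ord_max i with Some j => f j | None => y end.

Lemma ext_widen n (f : 'I_n -> M) y (j : 'I_n) : ext f y (widen_ord (leqnSn n) j) = f j.
Proof.
rewrite /ext.
have -> : widen_ord (leqnSn n) j = lift ord_max j by apply: val_inj; rewrite /= /bump leqNgt ltn_ord.
by rewrite liftK.
Qed.

Lemma ext_max n (f : 'I_n -> M) y : ext f y ord_max = y.
Proof. by rewrite /ext unlift_none. Qed.

Lemma sum_ext n (f : 'I_n -> M) y (a : 'I_n.+1 -> nat) :
  \sum_(i < n.+1) ext f y i *+ a i =
  \sum_(j < n) f j *+ a (widen_ord (leqnSn n) j) + y *+ a ord_max.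
Proof.
rewrite big_ord_recr /= ext_max; congr (_ + _); apply: eq_bigr => j _.
by rewrite ext_widen.
Qed.

Lemma ord_cases n (P : 'I_n.+1 -> Prop) :
  (forall j : 'I_n, P (widen_ord (leqnSn n) j)) -> P ord_max -> forall i, P i.
Proof.
move=> H1 H2 i; case: (ltnP i n) => Hi.
  by have -> : i = widen_ord (leqnSn n) (Ordinal Hi) by apply: val_inj.
have -> : i = ord_max; last by [].
by apply: val_inj => /=; apply/eqP; rewrite eqn_leq Hi -ltnS ltn_ord.
Qed.

Lemma sumMn n (h : 'I_n -> M) (a : 'I_n -> nat) c :
  (\sum_(j < n) h j *+ a j) *+ c = \sum_(j < n) h j *+ (a j * c)%N.
Proof. rewrite -sumrMnl; apply: eq_bigr => j _; by rewrite mulrnA. Qed.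

Lemma sumD n (h : 'I_n -> M) (a b : 'I_n -> nat) :
  \sum_(j < n) h j *+ a j + \sum_(j < n) h j *+ b j = \sum_(j < n) h j *+ (a j + b j)%N.
Proof. rewrite -big_split; apply: eq_bigr => j _; by rewrite mulrnDr. Qed.

Lemma span_ext n (f : 'I_n -> M) s x : spanned f x -> spanned (ext f s) x.
Proof.
move=> [d [a [b [dp E]]]].
exists d, (fun i => oapp a 0%N (unlift ord_max i)), (fun i => oapp b 0%N (unlift ord_max i)).
split => //; rewrite !sum_ext /= !unlift_none /= !mulr0n !addr0.
suff H : forall c : 'I_n -> nat, \sum_(j < n) f j *+ oapp c 0%N (unlift ord_max (widen_ord (leqnSn n) j))
  = \sum_(j < n) f j *+ c j by rewrite !H.
move=> c; apply: eq_bigr => j _.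
have -> : widen_ord (leqnSn n) j = lift ord_max j by apply: val_inj; rewrite /= /bump leqNgt ltn_ord.
by rewrite liftK.
Qed.

Lemma span_gen n (h : 'I_n -> M) i : spanned h (h i).
Proof.
exists 1%N, (fun _ => 0%N), (fun j => (j == i)%N : nat); split => //.
rewrite big1 ?addr0 ?mulr1n; last by move=> j _; rewrite mulr0n.
rewrite (bigD1 i) //= eqxx mulr1n big1 ?addr0 // => j /negbTE ->; by rewrite mulr0n.
Qed.

Lemma span0 n (h : 'I_n -> M) : spanned h 0.
Proof.
exists 1%N, (fun _ => 0%N), (fun _ => 0%N); split => //.
by rewrite mul0rn add0r.
Qed.

Lemma span_add n (h : 'I_n -> M) x y : spanned h x -> spanned h y -> spanned h (x + y).
Proof.
move=> [d [a [b [dp E]]]] [d' [a' [b' [dp' E']]]].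
exists (d * d')%N, (fun j => a j * d' + a' j * d)%N, (fun j => b j * d' + b' j * d)%N.
split; first by rewrite muln_gt0 dp dp'.
rewrite -!sumD -!sumMn -E -E' !mulrnDl -!mulrnA [(d' * d)%N]mulnC.
rewrite -!addrA; congr (_ + _).
rewrite addrC -!addrA; congr (_ + _); by rewrite addrC.
Qed.

Lemma span_mul n (h : 'I_n -> M) x c : spanned h x -> spanned h (x *+ c).
Proof.
move=> Hx; elim: c => [|c IH]; first by rewrite mulr0n; apply: span0.
by rewrite mulrS; apply: span_add.
Qed.

Lemma span_cancel n (h : 'I_n -> M) x m u v : (0 < m)%N -> x *+ m + u = v ->
  spanned h u -> spanned h v -> spanned h x.
Proof.
move=> mp E [du [au [bu [dup Eu]]]] [dv [av [bv [dvp Ev]]]].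
exists (m * (du * dv))%N, (fun j => bu j * dv + av j * du)%N,
       (fun j => bv j * du + au j * dv)%N.
split; first by rewrite !muln_gt0 mp dup dvp.
rewrite -!sumD -!sumMn -Eu -Ev !mulrnDl -!mulrnA.
have E2 : x *+ (m * (du * dv)) + u *+ (du * dv) = v *+ (du * dv).
  by rewrite -E mulrnDl mulrnA.
have E3 : v *+ (dv * du) = v *+ (du * dv) by rewrite mulnC.
rewrite E3 -E2.
set X := x *+ _; set U := u *+ _; set A1 := (\sum_(j < n) h j *+ au j) *+ dv;
set A2 := (\sum_(j < n) h j *+ av j) *+ du.
by rewrite -!addrA; congr (_ + (_ + _)); rewrite addrC.
Qed.


Lemma not_indep k (f : 'I_k -> M) : ~ gp_Q_independent f ->
  exists (a b : 'I_k -> nat) (n : nat) (i : 'I_k), [/\ (0 < n)%N,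
    (\sum_(j < k) f j *+ a j) *+ n = (\sum_(j < k) f j *+ b j) *+ n & a i <> b i].
Proof.
move=> H; apply: NNPP => H'; apply: H => a b n np E i.
apply: NNPP => Hi; apply: H'; by exists a, b, n, i.
Qed.

Lemma maxspan n (f : 'I_n -> M) y : gp_Q_independent f -> ~ gp_Q_independent (ext f y) ->
  spanned f y.
Proof.
move=> Hf /not_indep [a [b [c [i [cp E Hi]]]]].
move: E; rewrite !sum_ext !mulrnDl !sumMn -!(mulrnA y).
set a' := fun j => a (widen_ord (leqnSn n) j).
set b' := fun j => b (widen_ord (leqnSn n) j).
set A := \sum_(j < n) _; set B := \sum_(j < n) _ => E.
case: (ltngtP (a ord_max) (b ord_max)) => Hm.
- exists ((b ord_max - a ord_max) * c)%N, (fun j => b' j * c)%N, (fun j => a' j * c)%N.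
  split; first by rewrite muln_gt0 subn_gt0 Hm cp.
  change (y *+ ((b ord_max - a ord_max) * c)%N + B = A).
  apply: (@cancelr (y *+ (a ord_max * c)%N)).
  by rewrite E addrAC -mulrnDr -mulnDl (subnK (ltnW Hm)) // addrC.
- exists ((a ord_max - b ord_max) * c)%N, (fun j => a' j * c)%N, (fun j => b' j * c)%N.
  split; first by rewrite muln_gt0 subn_gt0 Hm cp.
  change (y *+ ((a ord_max - b ord_max) * c)%N + A = B).
  apply: (@cancelr (y *+ (b ord_max * c)%N)).
  by rewrite -E addrAC -mulrnDr -mulnDl (subnK (ltnW Hm)) // addrC.
exfalso; apply: Hi; move: i; apply: (@ord_cases n (fun i => a i = b i)) => // j.
rewrite Hm in E; have E' := cancelr E.
have := Hf a' b' c cp; rewrite !sumMn; move=> /(_ E' j) //.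
Qed.

Lemma face_sum (Phi : M -> Prop) n (h : 'I_n -> M) (a : 'I_n -> nat) :
  submonoid Phi -> (forall j, Phi (h j)) -> Phi (\sum_(j < n) h j *+ a j).
Proof.
move=> [H0 HD] Hh; elim/big_ind: _ => // j _.
elim: (a j) => [|m IH]; first by rewrite mulr0n.
by rewrite mulrS; apply: HD.
Qed.

Lemma face_mul (Phi : M -> Prop) x m : face Phi -> (0 < m)%N -> Phi (x *+ m) -> Phi x.
Proof.
move=> [_ HF]; case: m => // m _; rewrite mulrS => /HF; tauto.
Qed.

Lemma mul_face (Phi : M -> Prop) x m : submonoid Phi -> Phi x -> Phi (x *+ m).
Proof.
move=> [H0 HD] Hx; elim: m => [|m IH]; first by rewrite mulr0n.
by rewrite mulrS; apply: HD.
Qed.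

Lemma ext_indep_face (Phi : M -> Prop) n (f : 'I_n -> M) y : face Phi ->
  (forall i, Phi (f i)) -> gp_Q_independent f -> ~ Phi y -> gp_Q_independent (ext f y).
Proof.
move=> HPhi Hf Hind Hy; apply: NNPP => Hn.
have [d [a [b [dp E]]]] := maxspan Hind Hn.
apply: Hy; apply: (face_mul HPhi dp).
have : Phi (\sum_(j < n) f j *+ b j) by apply: face_sum => //; case: HPhi.
rewrite -E; case: HPhi => _ HF /HF; tauto.
Qed.

Variables (N0 : nat) (g : 'I_N0 -> M).
Hypothesis Hg : forall x : M, exists a : 'I_N0 -> nat, x = \sum_(i < N0) g i *+ a i.

Lemma span_all x : spanned g x.
Proof.
have [a ->] := Hg x; exists 1%N, (fun _ => 0%N), a; split => //.
by rewrite mulr1n [X in _ + X]big1 ?addr0 // => j _; rewrite mulr0n.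
Qed.

Lemma indep_le k (f : 'I_k -> M) : gp_Q_independent f -> (k <= N0)%N.
Proof. by apply: span_bound => // i; apply: span_all. Qed.

Lemma max_exists (P : nat -> Prop) B : P 0%N -> (forall k, P k -> (k <= B)%N) ->
  exists r, P r /\ forall k, P k -> (k <= r)%N.
Proof.
elim: B => [|B IH] P0 HB.
  by exists 0%N; split => // k /HB; rewrite leqn0 => /eqP ->.
case: (classic (P B.+1)) => H; first by exists B.+1.
apply: IH => // k Pk; have := HB k Pk; rewrite leq_eqVlt => /orP [/eqP Hk|//].
by rewrite Hk in Pk.
Qed.

Lemma rank_exists (S : M -> Prop) : exists r, is_rank S r.
Proof.
have [r [[f [Sf If]] Hr]] : exists r, (exists f : 'I_r -> M, (forall i, S (f i)) /\ gp_Q_independent f)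
   /\ forall k, (exists f : 'I_k -> M, (forall i, S (f i)) /\ gp_Q_independent f) -> (k <= r)%N.
  apply: (@max_exists _ N0).
    by exists (fun _ => 0) ; split => [[]|a b n _ _ []].
  by move=> k [f [_ If]]; apply: indep_le If.
exists r; split; first by exists f.
move=> k f' Sf' If'; apply: Hr; by exists f'.
Qed.

Lemma rank_spec (S : M -> Prop) : is_rank S (rank S).
Proof. rewrite /rank; apply: epsilon_spec; apply: rank_exists. Qed.

Lemma is_rank_uniq (S : M -> Prop) r : is_rank S r -> rank S = r.
Proof.
move=> [[f [Sf If]] Hr]; have [[f' [Sf' If']] Hr'] := rank_spec S.
apply/eqP; rewrite eqn_leq; apply/andP; split; [exact: Hr Sf' If' | exact: Hr' Sf If].
Qed.

Lemma rank_ge (S : M -> Prop) k (f : 'I_k -> M) : (forall i, S (f i)) -> gp_Q_independent f -> (k <= rank S)%N.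
Proof. have [_ H] := rank_spec S; exact: H. Qed.

Lemma rank_basis (S : M -> Prop) : exists f : 'I_(rank S) -> M, (forall i, S (f i)) /\ gp_Q_independent f.
Proof. by have [H _] := rank_spec S. Qed.

Lemma rank_mono (S T : M -> Prop) : (forall x, S x -> T x) -> (rank S <= rank T)%N.
Proof.
move=> HST; have [f [Sf If]] := rank_basis S; apply: (rank_ge (f := f)) => // i.
by apply: HST.
Qed.

Lemma rank_ext (S T : M -> Prop) : (forall x, S x <-> T x) -> rank S = rank T.
Proof.
move=> H; apply/eqP; rewrite eqn_leq !rank_mono // => x; by rewrite H.
Qed.

Lemma rank_span (S : M -> Prop) n (h : 'I_n -> M) : (forall x, S x -> spanned h x) ->
  (rank S <= n)%N.
Proof.
move=> H; have [f [Sf If]] := rank_basis S; apply: (span_bound Hint (h := h) _ If) => i.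
by apply: H.
Qed.

Lemma rank_strict (Phi Gam : M -> Prop) y : face Phi -> (forall x, Phi x -> Gam x) ->
  Gam y -> ~ Phi y -> (rank Phi < rank Gam)%N.
Proof.
move=> HPhi Hsub Gy Py; have [f [Sf If]] := rank_basis Phi.
apply: (@rank_ge Gam _ (ext f y)); last by apply: (ext_indep_face HPhi).
by apply: (@ord_cases _ (fun i => Gam (ext f y i))) => [j|]; rewrite ?ext_widen ?ext_max //; apply: Hsub.
Qed.

Lemma basis_span (Phi : M -> Prop) (f : 'I_(rank Phi) -> M) x :
  (forall i, Phi (f i)) -> gp_Q_independent f -> Phi x -> spanned f x.
Proof.
move=> Sf If Px; apply: maxspan => // Hi.
have : ((rank Phi).+1 <= rank Phi)%N; last by rewrite ltnn.
apply: (@rank_ge Phi _ (ext f x)) => //.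
by apply: (@ord_cases _ (fun i => Phi (ext f x i))) => [j|]; rewrite ?ext_widen ?ext_max.
Qed.

End Rank.

Lemma exists_min_after (v : nat -> nat) a :
  exists j, (a < j)%N /\ forall j', (a < j')%N -> (v j <= v j')%N.
Proof.
apply: NNPP => H.
suff : forall n j, (a < j)%N -> (n <= v j)%N.
  by move=> /(_ (v a.+1).+1 a.+1 (ltnSn a)); rewrite ltnn.
elim=> [//|n IH] j Hj.
rewrite ltn_neqAle IH // andbT; apply/eqP => E.
apply: H; exists j; split => // j' Hj'; rewrite -E; exact: IH.
Qed.

Lemma mono_subseq (v : nat -> nat) : exists tau : nat -> nat,
  (forall k, tau k < tau k.+1)%N /\ forall k, (v (tau k) <= v (tau k.+1))%N.
Proof.
pose next a := proj1_sig (constructive_indefinite_description _ (exists_min_after v a)).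
have Hn a : (a < next a)%N /\ forall j', (a < j')%N -> (v (next a) <= v j')%N.
  exact: (proj2_sig (constructive_indefinite_description _ (exists_min_after v a))).
exists (fun k => iter k.+1 next 0%N); split => k.
  by rewrite [X in (_ < X)%N]iterS; case: (Hn (iter k.+1 next 0%N)).
rewrite [X in (_ <= v X)%N]iterS iterS.
have [H1 H2] := Hn (iter k next 0%N).
apply: H2; apply: (ltn_trans H1); by case: (Hn (next (iter k next 0%N))).
Qed.

Lemma chain_mono (s : nat -> nat) : (forall k, s k <= s k.+1)%N ->
  forall a b, (a <= b)%N -> (s a <= s b)%N.
Proof.
move=> H a b /subnK <-; elim: (b - a)%N => [//|d IH].
by rewrite addSn; apply: (leq_trans IH).
Qed.

Lemma chain_strict (s : nat -> nat) : (forall k, s k < s k.+1)%N ->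
  forall a b, (a < b)%N -> (s a < s b)%N.
Proof.
move=> H a b /subnK <-; elim: (b - a.+1)%N => [|d IH]; first by rewrite add0n.
by rewrite addSn; apply: (ltn_trans IH).
Qed.

Lemma dickson N (u : nat -> nat -> nat) : exists sigma : nat -> nat,
  (forall k, sigma k < sigma k.+1)%N /\
  forall t, (t < N)%N -> forall k, (u (sigma k) t <= u (sigma k.+1) t)%N.
Proof.
elim: N => [|N [sig [Hs Hu]]]; first by exists id.
have [tau [Ht Hv]] := mono_subseq (fun k => u (sig k) N).
exists (fun k => sig (tau k)); split.
  by move=> k; apply: chain_strict.
move=> t; rewrite ltnS leq_eqVlt => /orP [/eqP -> //|Htn] k.
apply: (chain_mono (s := fun k => u (sig k) t)) => //; first by move=> l; apply: Hu.
exact: ltnW.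
Qed.

Section WF.
Local Open Scope ring_scope.
Variable M : nmodType.
Hypothesis Hint : integral_monoid M.
Hypothesis Hsharp : sharp_monoid M.
Variables (N0 : nat) (g : 'I_N0 -> M).
Hypothesis Hg : forall x : M, exists a : 'I_N0 -> nat, x = \sum_(i < N0) g i *+ a i.

Lemma sum_zero (x y : M) : x + y = 0 -> x = 0.
Proof. by move=> H; apply: Hsharp; exists y. Qed.

Lemma no_chain (x z : nat -> M) : (forall k, x k = x k.+1 + z k) -> (forall k, z k <> 0) -> False.
Proof.
move=> Hx Hz.
pose c k := proj1_sig (constructive_indefinite_description _ (Hg (x k))).
have Hc k : x k = \sum_(i < N0) g i *+ c k i.
  exact: (proj2_sig (constructive_indefinite_description _ (Hg (x k)))).
have [sig [Hs Hu]] := dickson N0 (fun k t => oapp (c k) 0%N (insub t)).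
set i := sig 0%N; set j := sig 1%N.
have Hij : forall t : 'I_N0, (c i t <= c j t)%N.
  by move=> t; have := Hu t (ltn_ord t) 0%N; rewrite /= valK.
have Hxj : x j = x i + \sum_(t < N0) g t *+ (c j t - c i t).
  rewrite !Hc sumD; apply: eq_bigr => t _; by rewrite subnKC.
have tel : forall d, exists Z, x i = x (i + d.+1)%N + (z i + Z).
  elim=> [|d [Z HZ]]; first by exists 0; rewrite addr0 addn1.
  exists (z (i + d.+1)%N + Z); rewrite HZ [in LHS]Hx addnS.
  by rewrite !addnS !addrA; congr (_ + _); rewrite addrAC.
have [Z HZ] := tel (j - i.+1)%N.
move: HZ; rewrite addnS -addSn subnKC; last by apply: Hs.
rewrite Hxj -addrA -{1}[x i]addr0 => /Hint /esym.
by rewrite addrCA => /sum_zero; apply: Hz.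
Qed.

Definition sdiv (y x : M) : Prop := exists z, z <> 0 /\ x = y + z.

Lemma sdiv_wf : well_founded sdiv.
Proof.
move=> x0; apply: NNPP => Hna.
have step : forall x, ~ Acc sdiv x -> exists p : M * M, p.2 <> 0 /\ x = p.1 + p.2 /\ ~ Acc sdiv p.1.
  move=> x Hx; apply: NNPP => H; apply: Hx; constructor => y [z [Hz Ex]].
  apply: NNPP => Hy; apply: H; by exists (y, z).
pose F x := epsilon (inhabits (0, 0)) (fun p : M * M => p.2 <> 0 /\ x = p.1 + p.2 /\ ~ Acc sdiv p.1).
pose xs k := iter k (fun x => (F x).1) x0.
have Hxs : forall k, ~ Acc sdiv (xs k).
  move=> k; induction k as [|k IH]; first by [].
  rewrite /xs iterS -/(xs k).
  have [_ [_ H3]] := epsilon_spec (inhabits (0,0)) _ (step _ IH).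
  exact: H3.
apply: (@no_chain xs (fun k => (F (xs k)).2)).
  move=> k; have [_ [E _]] := epsilon_spec (inhabits (0,0)) _ (step _ (Hxs k)).
  exact: E.
move=> k; have [E _] := epsilon_spec (inhabits (0,0)) _ (step _ (Hxs k)).
exact: E.
Qed.

End WF.

Section GL.
Local Open Scope ring_scope.
Variable M : nmodType.
Hypothesis Hint : integral_monoid M.
Hypothesis Hsharp : sharp_monoid M.
Variables (N0 : nat) (g : 'I_N0 -> M).
Hypothesis Hg : forall x : M, exists a : 'I_N0 -> nat, x = \sum_(i < N0) g i *+ a i.

Let rspan := rank_span Hint Hg.
Let rstrict := rank_strict Hint Hg.
Let bspan := basis_span Hint Hg.
Let rmono := rank_mono Hint Hg.
Let rbasis := rank_basis Hint Hg.

Variables Psi Gam : M -> Prop.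
Hypothesis fPsi : face Psi.
Hypothesis fGam : face Gam.
Hypothesis PsiGam : forall x, Psi x -> Gam x.

Lemma Psi0 : Psi 0. Proof. by case: fPsi => [[]]. Qed.
Lemma PsiD x y : Psi x -> Psi y -> Psi (x + y). Proof. by case: fPsi => [[_ H]] _; apply: H. Qed.
Lemma PsiS x y : Psi (x + y) -> Psi x /\ Psi y. Proof. by case: fPsi => _; apply. Qed.
Lemma PsiM x m : Psi x -> Psi (x *+ m). Proof. by move=> H; apply: mul_face => //; case: fPsi. Qed.
Lemma Gam0 : Gam 0. Proof. by case: fGam => [[]]. Qed.
Lemma GamD x y : Gam x -> Gam y -> Gam (x + y). Proof. by case: fGam => [[_ H]] _; apply: H. Qed.
Lemma GamS x y : Gam (x + y) -> Gam x /\ Gam y. Proof. by case: fGam => _; apply. Qed.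
Lemma GamM x m : Gam x -> Gam (x *+ m). Proof. by move=> H; apply: mul_face => //; case: fGam. Qed.

Definition inC (I : {set 'I_N0}) (x : M) : Prop :=
  exists n (c : 'I_N0 -> nat) psi psi', [/\ (0 < n)%N, Psi psi, Psi psi' &
     x *+ n + psi = \sum_(j in I) g j *+ c j + psi'].

Definition Es (s x : M) : Prop :=
  exists m a phi phi', [/\ (0 < m)%N, Psi phi, Psi phi' & x *+ m + phi = s *+ a + phi'].

Lemma sumD1' (I : {set 'I_N0}) i (F : 'I_N0 -> M) : i \in I ->
  \sum_(j in I) F j = F i + \sum_(j in I :\ i) F j.
Proof.
move=> iI; rewrite (bigD1 i) //=; congr (_ + _); apply: eq_bigl => j.
by rewrite in_setD1 andbC.
Qed.

Lemma sumID (I : {set 'I_N0}) (a b : 'I_N0 -> nat) :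
  \sum_(j in I) g j *+ a j + \sum_(j in I) g j *+ b j = \sum_(j in I) g j *+ (a j + b j)%N.
Proof. rewrite -big_split; apply: eq_bigr => j _; by rewrite mulrnDr. Qed.

Lemma sumIM (I : {set 'I_N0}) (a : 'I_N0 -> nat) c :
  (\sum_(j in I) g j *+ a j) *+ c = \sum_(j in I) g j *+ (a j * c)%N.
Proof. rewrite -sumrMnl; apply: eq_bigr => j _; by rewrite mulrnA. Qed.

Lemma sumI_in (P : M -> Prop) (I : {set 'I_N0}) (a : 'I_N0 -> nat) :
  submonoid P -> (forall j, j \in I -> P (g j)) -> P (\sum_(j in I) g j *+ a j).
Proof.
move=> [P0 PD] H; elim/big_ind: _ => // j jI.
by apply: mul_face; [split | apply: H].
Qed.

Lemma TR (I : {set 'I_N0}) i x : i \in I -> inC (I :\ i) (g i) -> inC I x -> inC (I :\ i) x.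
Proof.
move=> iI [k [d [chi [chi' [kp Hchi Hchi' E2]]]]] [n [c [psi [psi' [np Hpsi Hpsi' E1]]]]].
exists (n * k)%N, (fun j => d j * c i + c j * k)%N, (psi *+ k + chi *+ c i), (chi' *+ c i + psi' *+ k).
split; [by rewrite muln_gt0 np kp | by apply: PsiD; apply: PsiM | by apply: PsiD; apply: PsiM |].
rewrite (sumD1' _ iI) in E1.
rewrite -sumID -!sumIM.
rewrite mulrnA addrA -mulrnDl E1 !mulrnDl -mulrnA mulnC mulrnA.
rewrite addrAC [_ + chi *+ c i]addrAC -mulrnDl E2 mulrnDl.
by rewrite -!addrA; congr (_ + _); rewrite addrCA.
Qed.



Lemma Es_mul s x m : (0 < m)%N -> Es s (x *+ m) -> Es s x.
Proof.
move=> mp [m' [a [phi [phi' [m'p H1 H2 E]]]]].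
exists (m * m')%N, a, phi, phi'; split => //; first by rewrite muln_gt0 mp m'p.
by rewrite mulrnA.
Qed.

Lemma Es_add s x y : Es s x -> Es s y -> Es s (x + y).
Proof.
move=> [m [a [phi [phi' [mp H1 H2 E]]]]] [m' [a' [chi [chi' [m'p H1' H2' E']]]]].
exists (m * m')%N, (a * m' + a' * m)%N, (phi *+ m' + chi *+ m), (phi' *+ m' + chi' *+ m).
split; [by rewrite muln_gt0 mp m'p | by apply: PsiD; apply: PsiM | by apply: PsiD; apply: PsiM |].
rewrite mulrnDl mulrnDr mulrnA [(m * m')%N]mulnC mulrnA !mulrnA.
rewrite addrACA -!mulrnDl E E' !mulrnDl.
by rewrite addrACA.
Qed.

Lemma Es_Psi s x : Psi x -> Es s x.
Proof.
move=> Px; exists 1%N, 0%N, 0, x; split => //; first exact: Psi0.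
by rewrite mulr1n mulr0n addr0 add0r.
Qed.

Lemma Es_self s : Es s s.
Proof. exists 1%N, 1%N, 0, 0; split => //; exact: Psi0. Qed.

Lemma Es_Gam s x : Gam s -> Es s x -> Gam x.
Proof.
move=> Gs [m [a [phi [phi' [mp H1 H2 E]]]]].
have : Gam (x *+ m + phi) by rewrite E; apply: GamD; [apply: GamM | apply: PsiGam].
by move=> /GamS [H _]; apply: (face_mul fGam mp).
Qed.

Lemma Es_rank s : (rank (Es s) <= (rank Psi).+1)%N.
Proof.
have [f [Sf If]] := rbasis Psi.
apply: (rspan (h := ext f s)) => x [m [a [phi [phi' [mp H1 H2 E]]]]].
apply: (span_cancel mp E).
  by apply: span_ext; apply: bspan.
apply: span_add; last by apply: span_ext; apply: bspan.
apply: span_mul; have := span_gen (ext f s) ord_max; by rewrite ext_max.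
Qed.

Lemma Es_inter s0 s1 x : Es s0 x -> Es s1 x -> ~ Psi x -> Es s0 s1.
Proof.
move=> [m [a [phi [phi' [mp H1 H2 E]]]]] [m' [a' [chi [chi' [m'p H1' H2' E']]]]] Px.
have a'p : (0 < a')%N.
  rewrite lt0n; apply/eqP => a0; apply: Px; apply: (face_mul fPsi m'p).
  have : Psi (x *+ m' + chi) by rewrite E' a0 mulr0n add0r.
  by move=> /PsiS [].
exists (a' * m)%N, (a * m')%N, (chi' *+ m + phi *+ m'), (phi' *+ m' + chi *+ m).
split; [by rewrite muln_gt0 a'p mp | by apply: PsiD; apply: PsiM | by apply: PsiD; apply: PsiM |].
rewrite mulrnA addrA -mulrnDl -E' mulrnDl -mulrnA mulnC mulrnA.
rewrite addrAC -mulrnDl E mulrnDl mulrnA.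
by rewrite addrA.
Qed.

Definition good (E : M -> Prop) := [/\ face E, (forall x, Psi x -> E x), (forall x, E x -> Gam x),
   (exists x, E x /\ ~ Psi x) & (rank E <= (rank Psi).+1)%N].

Definition GLconcl := exists E1 E2 : M -> Prop, [/\ good E1, good E2 & forall x, E1 x -> E2 x -> Psi x].

Section Ess.
Variable I : {set 'I_N0}.
Hypothesis IGam : forall j, j \in I -> Gam (g j).
Hypothesis Icov : forall x, Gam x -> inC I x.
Hypothesis Hess : forall i, i \in I -> ~ (forall x, Gam x -> inC (I :\ i) x).

Lemma gi_notPsi i : i \in I -> ~ Psi (g i).
Proof.
move=> iI Pg; apply: (Hess iI) => x Gx; apply: (TR iI) => //; last exact: Icov.
exists 1%N, (fun _ => 0%N), 0, (g i); split => //; first exact: Psi0.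
by rewrite big1 ?add0r ?addr0 ?mulr1n // => j _; rewrite mulr0n.
Qed.

Lemma extremal i u v psi psi' n : i \in I -> Gam u -> Gam v -> Psi psi -> Psi psi' ->
  u + v + psi = g i *+ n + psi' -> Es (g i) u.
Proof.
move=> iI Gu Gv Hp Hp' E.
have [m1 [al [c1 [c1' [m1p Hc1 Hc1' Eu]]]]] := Icov Gu.
have [m2 [be [c2 [c2' [m2p Hc2 Hc2' Ev]]]]] := Icov Gv.
pose al' := fun j => (al j * m2)%N.
pose be' := fun j => (be j * m1)%N.
have Eu' : u *+ (m1 * m2) + c1 *+ m2 = \sum_(j in I) g j *+ al' j + c1' *+ m2.
  by rewrite -sumIM -mulrnDl -Eu mulrnDl mulrnA.
have Ev' : v *+ (m1 * m2) + c2 *+ m1 = \sum_(j in I) g j *+ be' j + c2' *+ m1.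
  by rewrite -sumIM -mulrnDl -Ev mulrnDl mulnC mulrnA.
have T : \sum_(j in I) g j *+ (al' j + be' j)%N + (c1' *+ m2 + c2' *+ m1 + psi *+ (m1 * m2))
     = g i *+ (n * (m1 * m2)) + (psi' *+ (m1 * m2) + c1 *+ m2 + c2 *+ m1).
  rewrite -sumID !addrA [LHS](ACl ((1*3)*(2*4)*5)) /= -Eu' -Ev'.
  rewrite !addrA [LHS](ACl (1*3*5*2*4)) /= -!mulrnDl E mulrnDl -mulrnA.
  by [].
rewrite (sumD1' _ iI) in T.
set R := \sum_(j in I :\ i) _ in T.
set X := (c1' *+ m2 + _ + _) in T; set Y := (psi' *+ _ + _ + _) in T.
have HX : Psi X by rewrite /X; apply: PsiD; [apply: PsiD|]; apply: PsiM.
have HY : Psi Y by rewrite /Y; apply: PsiD; [apply: PsiD|]; apply: PsiM.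
case: (ltnP (al' i + be' i) (n * (m1 * m2))) => Hlt.
  exfalso; apply: (Hess iI) => x Gx; apply: (TR iI); last exact: Icov.
  exists (n * (m1 * m2) - (al' i + be' i))%N, (fun j => al' j + be' j)%N, Y, X.
  split => //; first by rewrite subn_gt0.
  have T2 : g i *+ (al' i + be' i) + (R + X) =
            g i *+ (al' i + be' i) + (g i *+ (n * (m1 * m2) - (al' i + be' i)) + Y).
    by rewrite addrA T [RHS]addrA -mulrnDr subnKC // ltnW.
  by rewrite (Hint T2) addrC.
have T2 : g i *+ (n * (m1 * m2)) + (g i *+ (al' i + be' i - n * (m1 * m2)) + R + X) =
          g i *+ (n * (m1 * m2)) + Y.
  by rewrite -T !addrA -mulrnDr subnKC.
have HR := Hint T2.
move: HY; rewrite -HR => /PsiS [/PsiS [_]].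
rewrite /R -sumID => /PsiS [HA _].
exists (m1 * m2)%N, (al' i), (c1 *+ m2), (\sum_(j in I :\ i) g j *+ al' j + c1' *+ m2).
split; [by rewrite muln_gt0 m1p m2p | by apply: PsiM | by apply: PsiD; last apply: PsiM |].
by rewrite Eu' (sumD1' _ iI) addrA.
Qed.


Lemma Es_face i : i \in I -> face (Es (g i)).
Proof.
move=> iI; split; first split.
- exact: (Es_Psi _ Psi0).
- by move=> x y; apply: Es_add.
move=> x y [m [a [phi [phi' [mp H1 H2 E]]]]].
have Gs : Gam (g i) := IGam iI.
have G1 : Gam (x *+ m + y *+ m + phi).
  by rewrite -mulrnDl E; apply: GamD; [apply: GamM | apply: PsiGam].
have [Gxy _] := GamS G1; have [Gx Gy] := GamS Gxy.
split.
- apply: (Es_mul mp); apply: (extremal (n := a) iI Gx Gy H1 H2); by rewrite -mulrnDl.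
- apply: (Es_mul mp); apply: (extremal (n := a) iI Gy Gx H1 H2).
  by rewrite [y *+ m + _]addrC -mulrnDl.
Qed.

Lemma Es_good i : i \in I -> good (Es (g i)).
Proof.
move=> iI; split.
- exact: Es_face.
- by move=> x; apply: Es_Psi.
- by move=> x; apply: Es_Gam; apply: IGam.
- exists (g i); split; [exact: Es_self | exact: gi_notPsi].
exact: Es_rank.
Qed.

Lemma main_ess : (rank Psi + 2 <= rank Gam)%N -> GLconcl.
Proof.
move=> Hr.
have [i0 i0I] : exists i0, i0 \in I.
  apply: NNPP => H; suff HG : forall x, Gam x -> Psi x.
    by have := rmono HG; lia.
  move=> x Gx; have [n [c [psi [psi' [np Hp Hp' E]]]]] := Icov Gx.
  rewrite big_pred0 ?add0r in E; last first.
    by move=> j; apply/negP => jI; apply: H; exists j.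
  apply: (face_mul fPsi np).
  have HH : Psi (x *+ n + psi) by rewrite E.
  by case: (PsiS HH).
case: (classic (forall i, i \in I -> Es (g i0) (g i))) => Hall.
  exfalso.
  have Hf := Es_face i0I.
  suff HG : forall x, Gam x -> Es (g i0) x.
    have := rmono HG; have := Es_rank (g i0); lia.
  move=> x Gx; have [n [c [psi [psi' [np Hp Hp' E]]]]] := Icov Gx.
  apply: (Es_mul np).
  have : Es (g i0) (x *+ n + psi).
    rewrite E; apply: Es_add; last by apply: Es_Psi.
    by apply: sumI_in => //; case: Hf.
  by case: Hf => _ HF /HF [].
have [i1 Hi1] := not_all_ex_not _ _ Hall.
have [i1I Hn] : i1 \in I /\ ~ Es (g i0) (g i1).
  by split; [apply: NNPP => H; apply: Hi1 => /H | move=> H; apply: Hi1 => _].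
exists (Es (g i0)), (Es (g i1)); split; [exact: Es_good | exact: Es_good |].
move=> x H0 H1; apply: NNPP => Px; apply: Hn; exact: (Es_inter H0 H1 Px).
Qed.

End Ess.

Lemma GL_aux n : forall I : {set 'I_N0}, (#|I| <= n)%N ->
  (forall j, j \in I -> Gam (g j)) -> (forall x, Gam x -> inC I x) ->
  (rank Psi + 2 <= rank Gam)%N -> GLconcl.
Proof.
elim: n => [|n IH] I HI IGam Icov Hr.
- apply: (main_ess IGam Icov) => // i iI.
  by move: HI; rewrite leqn0 => /eqP /cards0_eq HI; rewrite HI inE in iI.
- case: (classic (exists i, i \in I /\ forall x, Gam x -> inC (I :\ i) x)) => [[i [iI Hi]]|Hno].
    apply: (IH (I :\ i)) => //.
      by move: HI; rewrite (cardsD1 i) iI.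
    by move=> j; rewrite in_setD1 => /andP [_ /IGam].
  apply: (main_ess IGam Icov) => // i iI H; apply: Hno; by exists i.
Qed.

Lemma GL : (rank Psi + 2 <= rank Gam)%N -> GLconcl.
Proof.
pose dec (P : Prop) : bool := if excluded_middle_informative P then true else false.
have decP : forall P, dec P = true <-> P.
  by move=> P; rewrite /dec; case: excluded_middle_informative.
apply: (@GL_aux #|[set j | dec (Gam (g j))]| [set j | dec (Gam (g j))]) => //.
  by move=> j; rewrite inE => /decP.
move=> x Gx; have [a Ea] := Hg x.
exists 1%N, a, 0, 0; split => //; [exact: Psi0 | exact: Psi0 |].
rewrite mulr1n !addr0 Ea.
rewrite (bigID (fun j => dec (Gam (g j)))) /= [X in _ + X]big1 ?addr0.
  by apply: eq_bigl => j; rewrite inE.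
move=> j /negbTE Hj; case Ha: (a j) => [|k]; first by rewrite mulr0n.
exfalso; move: Hj; rewrite (proj2 (decP _)) //.
move: Gx; rewrite Ea (bigD1 j) //= Ha mulrS -addrA => /GamS [] //.
Qed.

End GL.

Section Main.
Local Open Scope ring_scope.
Variable M : nmodType.
Hypothesis Hint : integral_monoid M.
Hypothesis Hsharp : sharp_monoid M.
Hypothesis Hsat : saturated_monoid M.
Variables (N0 : nat) (g : 'I_N0 -> M).
Hypothesis Hg : forall x : M, exists a : 'I_N0 -> nat, x = \sum_(i < N0) g i *+ a i.

Let rspan := rank_span Hint Hg.
Let rstrict := rank_strict Hint Hg.
Let rmono := rank_mono Hint Hg.
Let rbasis := rank_basis Hint Hg.
Let rext := rank_ext Hint Hg.
Let rge := rank_ge Hint Hg.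
Let wf := sdiv_wf Hint Hsharp Hg.

Lemma szero (x y : M) : x + y = 0 -> x = 0 /\ y = 0.
Proof.
move=> H; split; apply: Hsharp; [by exists y | by exists x; rewrite addrC].
Qed.

Lemma mul_zero (x : M) c : (0 < c)%N -> x *+ c = 0 -> x = 0.
Proof. by case: c => // c _; rewrite mulrS => /szero []. Qed.

Lemma mul_inj (x : M) a b : x <> 0 -> x *+ a = x *+ b -> a = b.
Proof.
move=> x0 E; case: (ltngtP a b) => // H; exfalso; apply: x0.
- apply: (@mul_zero _ (b - a)); first by rewrite subn_gt0.
  apply: (@Hint (x *+ a)); by rewrite -mulrnDr (subnKC (ltnW H)) addr0.
- apply: (@mul_zero _ (a - b)); first by rewrite subn_gt0.
  apply: (@Hint (x *+ b)); by rewrite -mulrnDr (subnKC (ltnW H)) addr0.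
Qed.

Lemma fullface : face (fun _ : M => True).
Proof. by split. Qed.

Lemma zeroface : face (fun x : M => x = 0).
Proof.
split; first by split => // x y -> ->; rewrite addr0.
by move=> x y /szero.
Qed.

Lemma rank_zero : rank (fun x : M => x = 0) = 0%N.
Proof.
apply/eqP; rewrite -leqn0; apply: (rspan (h := fun i : 'I_0 => 0)) => x ->; exact: span0.
Qed.

Lemma rank_lt_rk (Phi : M -> Prop) y : face Phi -> ~ Phi y -> (rank Phi < rk M)%N.
Proof. move=> HF Hy; exact: (rstrict HF (fun _ _ => I) I Hy). Qed.

Lemma facet_exists : forall d (Phi : M -> Prop) y, (rk M - rank Phi <= d)%N ->
  face Phi -> ~ Phi y ->
  exists Psi, [/\ face Psi, (forall x, Phi x -> Psi x), ~ Psi y & rank Psi = (rk M).-1].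
Proof.
elim=> [|d IH] Phi y Hd HF Hy; have Hlt := rank_lt_rk HF Hy.
  by exfalso; move: Hd; rewrite leqn0 subn_eq0 leqNgt Hlt.
case: (leqP (rank Phi + 2) (rk M)) => H2; last first.
  exists Phi; split => //; lia.
have [E1 [E2 [[F1 S1 _ [x1 [E1x1 Px1]] _] [F2 S2 _ [x2 [E2x2 Px2]] _] Hin]]] :=
  GL Hint Hg HF fullface (fun _ _ => I) H2.
have [E [FE SE NEy Hr]] : exists E, [/\ face E, (forall x, Phi x -> E x), ~ E y &
      (rank Phi < rank E)%N].
  case: (classic (E1 y)) => Hy1.
    case: (classic (E2 y)) => Hy2; first by exfalso; apply: Hy; apply: Hin.
    exists E2; split => //; exact: (rstrict HF S2 E2x2 Px2).
  exists E1; split => //; exact: (rstrict HF S1 E1x1 Px1).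
have [Psi [HP1 HP2 HP3 HP4]] := IH E y ltac:(lia) FE NEy.
by exists Psi; split => // x /SE /HP2.
Qed.

Lemma facet_exists' (Phi : M -> Prop) y : face Phi -> ~ Phi y ->
  exists Psi, [/\ face Psi, (forall x, Phi x -> Psi x), ~ Psi y & rank Psi = (rk M).-1].
Proof. exact: (@facet_exists (rk M)) (leq_subr _ _). Qed.

Lemma facet_prime (Psi : M -> Prop) : face Psi -> rank Psi = (rk M).-1 -> (0 < rk M)%N ->
  prime_ideal (fun x => ~ Psi x) /\ height (fun x => ~ Psi x) = 1%N.
Proof.
move=> [[P0 PD] PS] Hr Hrk; split.
  split; first by move=> x y Hx Hxy; apply: Hx; case: (PS _ _ Hxy).
  split => [H|x y Hx Hy H]; apply: H => //; apply: PD; exact: NNPP.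
rewrite /height (rext (T := Psi)) ?Hr; first lia.
by move=> x; split => [/NNPP|H /(_ H)].
Qed.


Lemma dep2_aux (y e : M) A0 A1 B0 B1 : y <> 0 -> (A0 < B0)%N ->
  y *+ A0 + e *+ A1 = y *+ B0 + e *+ B1 ->
  exists c d, [/\ (0 < c)%N, (0 < d)%N & y *+ c = e *+ d].
Proof.
move=> y0 HA E.
have E1 : e *+ A1 = y *+ (B0 - A0) + e *+ B1.
  apply: (@Hint (y *+ A0)); by rewrite E addrA -mulrnDr (subnKC (ltnW HA)).
case: (leqP A1 B1) => HB.
  exfalso; apply: y0; apply: (@mul_zero _ (B0 - A0)); first by rewrite subn_gt0.
  have E2 : e *+ A1 + 0 = e *+ A1 + (y *+ (B0 - A0) + e *+ (B1 - A1)).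
    by rewrite addr0 addrCA -mulrnDr (subnKC HB) E1 addrC.
  by have [] := szero (esym (Hint E2)).
exists (B0 - A0)%N, (A1 - B1)%N; split; [by rewrite subn_gt0 | by rewrite subn_gt0 |].
apply: (@cancelr _ Hint (e *+ B1)); by rewrite -mulrnDr subnK ?(ltnW HB) // E1.
Qed.

Lemma dep2 (y e : M) A0 A1 B0 B1 : y <> 0 -> e <> 0 ->
  y *+ A0 + e *+ A1 = y *+ B0 + e *+ B1 -> (A0 <> B0 \/ A1 <> B1) ->
  exists c d, [/\ (0 < c)%N, (0 < d)%N & y *+ c = e *+ d].
Proof.
move=> y0 e0 E Hne; case: (ltngtP A0 B0) => H.
- exact: dep2_aux y0 H E.
- exact: dep2_aux y0 H (esym E).
exfalso; rewrite H in E Hne; have := Hint E => /(mul_inj e0) H1.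
by case: Hne.
Qed.

Lemma dep_rank1 (G : M -> Prop) y e : (rank G <= 1)%N -> G y -> G e -> y <> 0 -> e <> 0 ->
  exists c d, [/\ (0 < c)%N, (0 < d)%N & y *+ c = e *+ d].
Proof.
move=> Hr Gy Ge y0 e0.
pose f2 := fun i : 'I_2 => if i == ord0 then y else e.
have Hn : ~ gp_Q_independent f2.
  move=> Hi; have H2 : (2 <= rank G)%N.
    by apply: (rge (f := f2)) => // i; rewrite /f2; case: (i == ord0).
  by move: (leq_trans H2 Hr).
have [a [b [n [i [np E Hab]]]]] := not_indep Hn.
move: E; rewrite !big_ord_recl !big_ord0 !addr0 /f2 /= !mulrnDl -!mulrnA.
move=> E; apply: (dep2 y0 e0 E).
move: i Hab => [[|[|k]] Hk] Hab //.
- left => H; apply: Hab; move: H => /eqP; rewrite eqn_mul2r eqn0Ngt np /=.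
  by move=> /eqP H; have -> : Ordinal Hk = ord0 by apply: val_inj.
- right => H; apply: Hab; move: H => /eqP; rewrite eqn_mul2r eqn0Ngt np /=.
  by move=> /eqP H; have -> : Ordinal Hk = lift ord0 ord0 by apply: val_inj.
Qed.


Variable p : M -> Prop.
Hypothesis Hp : prime_ideal p.
Hypothesis Hh : height p = 1%N.

Local Notation F := (fun x : M => ~ p x).
Local Notation FI := (gen_ideal (face_plus (fun x : M => ~ p x))).

Lemma p0 : ~ p 0. Proof. by case: Hp => _ []. Qed.
Lemma pideal x y : p x -> p (x + y). Proof. by case: Hp => H _; apply: H. Qed.
Lemma Fsub x y : ~ p x -> ~ p y -> ~ p (x + y). Proof. by case: Hp => _ [_ H]; apply: H. Qed.
Lemma pM x n : (0 < n)%N -> p x -> p (x *+ n).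
Proof. by case: n => // n _ Hx; rewrite mulrS; apply: pideal. Qed.

Lemma F_face : face F.
Proof.
split; first by split; [exact: p0 | exact: Fsub].
move=> x y H; split => Hx; apply: H; [exact: pideal | rewrite addrC; exact: pideal].
Qed.

Lemma rkF : (0 < rk M)%N /\ rank F = (rk M).-1.
Proof.
have := rmono (S := F) (T := fun _ => True) (fun _ _ => I).
move: Hh; rewrite /height /rk; lia.
Qed.

Lemma p_ex : exists x, p x.
Proof.
apply: NNPP => H.
have E : rank F = rk M by apply: rext => x; split => // _ Hx; apply: H; exists x.
by move: Hh; rewrite /height E subnn.
Qed.

Lemma FI_iff x : FI x <-> exists f m, [/\ F f, f <> 0 & x = f + m].
Proof.
split.
  move=> [f [m [[Ff Hf] ->]]]; exists f, m; split => // f0; apply: Hf.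
  by exists 0; rewrite f0 addr0; split => //; exact: p0.
move=> [f [m [Ff f0 ->]]]; exists f, m; split => //; split => // [[y [_ Hy]]].
by apply: f0; case: (szero Hy).
Qed.

Lemma FI_F f m : F f -> f <> 0 -> FI (f + m).
Proof. by move=> Ff f0; apply/FI_iff; exists f, m. Qed.

Lemma FI_ideal x y : FI x -> FI (x + y).
Proof. by move=> [f [m [Hf ->]]]; exists f, (m + y); rewrite addrA. Qed.

Lemma Gface : prime_ideal FI -> face (fun x => ~ FI x).
Proof.
move=> [_ HS]; split => // x y H; split => Hx; apply: H; first exact: FI_ideal.
rewrite addrC; exact: FI_ideal.
Qed.

Lemma GF x : ~ FI x -> F x -> x = 0.
Proof.
move=> H Fx; apply: NNPP => x0; apply: H; rewrite -[x]addr0; exact: FI_F.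
Qed.

Lemma H_e : prime_ideal FI -> (rank (fun x => ~ FI x) <= 1)%N ->
  exists e, forall x, p x <-> exists m, x = e + m.
Proof.
move=> FIp Hr.
have GfF := Gface FIp.
have dec : forall x, p x -> exists f y, [/\ F f, ~ FI y, p y & x = f + y].
  move=> x; elim/(well_founded_ind wf): x => x IH px.
  case: (classic (FI x)) => Hx; last by exists 0, x; rewrite add0r; split => //; exact: p0.
  have [f [m [Ff f0 Ex]]] := (FI_iff x).1 Hx.
  have pm : p m by apply: NNPP => Hm; apply: (Fsub Ff Hm); rewrite -Ex.
  have Hsd : sdiv m x by exists f; split => //; rewrite Ex addrC.
  have [f' [y [Ff' Gy py Em]]] := IH m Hsd pm.
  exists (f + f'), y; split => //; [exact: Fsub | by rewrite Ex Em addrA].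
have [x0 px0] := p_ex.
have [_ [y0 [_ Gy0 py0 _]]] := dec x0 px0.
have y00 : y0 <> 0 by move=> y0E; apply: p0; rewrite -y0E.
have atom_gen : forall y, ~ FI y -> y <> 0 ->
    exists e, [/\ ~ FI e, e <> 0 & forall u v, e = u + v -> u = 0 \/ v = 0].
  move=> y; elim/(well_founded_ind wf): y => y IH Gy yn0.
  case: (classic (forall u v, y = u + v -> u = 0 \/ v = 0)) => Hat; first by exists y.
  have [u [v [Euv [u0 v0]]]] : exists u v, y = u + v /\ u <> 0 /\ v <> 0.
    apply: NNPP => H; apply: Hat => u v Euv; apply: NNPP => H2; apply: H.
    by exists u, v; split => //; split => H3; apply: H2; [left|right].
  apply: (IH u) => //; first by exists v.
  by move=> Hu; apply: Gy; rewrite Euv; apply: FI_ideal.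
have [e [Ge e0 Hat]] := atom_gen y0 Gy0 y00.
have pe : p e by apply: NNPP => Fe; apply: e0; apply: GF.
have divs : forall y, ~ FI y -> y <> 0 -> exists m, y = e + m.
  move=> y Gy yn0; have [c [d [cp dp E]]] := dep_rank1 Hr Gy Ge yn0 e0.
  case: (leqP c d) => Hcd.
    apply: (Hsat (c := e *+ (d - c)) cp); by rewrite E -mulrnDr subnKC.
  have [m' Em'] : exists m', e = y + m'.
    apply: (Hsat (c := e *+ (c - d)) cp).
    by rewrite E -mulrnDr subnKC // ltnW.
  exists 0; rewrite addr0 Em'; case: (Hat _ _ Em') => // ->; by rewrite addr0.
exists e => x; split.
  move=> px; have [f [y [Ff Gy py ->]]] := dec x px.
  have yn0 : y <> 0 by move=> yE; apply: p0; rewrite -yE.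
  have [m ->] := divs y Gy yn0; exists (f + m); by rewrite addrCA.
by move=> [m ->]; apply: pideal.
Qed.


Section Egen.
Variable e : M.
Hypothesis He : forall x, p x <-> exists m, x = e + m.

Lemma prime_face (q : M -> Prop) : prime_ideal q -> face (fun x => ~ q x).
Proof.
move=> [Hi Hs]; split => // x y H; split => Hx; apply: H; first exact: Hi.
rewrite addrC; exact: Hi.
Qed.

Lemma pe : p e. Proof. by apply/He; exists 0; rewrite addr0. Qed.
Lemma e0 : e <> 0. Proof. by move=> E; apply: p0; rewrite -E; exact: pe. Qed.

Lemma dec_e x : exists f n, ~ p f /\ x = f + e *+ n.
Proof.
elim/(well_founded_ind wf): x => x IH.
case: (classic (p x)) => px; last by exists x, 0%N; rewrite mulr0n addr0.
have [m Em] := (He x).1 px.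
have Hsd : sdiv m x by exists e; split; [exact: e0 | rewrite Em addrC].
have [f [n [Ff Emf]]] := IH m Hsd.
by exists f, n.+1; split => //; rewrite Em Emf mulrS addrCA.
Qed.

Lemma uniq_e f f' n n' : ~ p f -> ~ p f' -> f + e *+ n = f' + e *+ n' -> f = f' /\ n = n'.
Proof.
move=> Ff Ff' E; case: (ltngtP n n') => H.
- exfalso; apply: Ff.
  have E2 : f + e *+ n = f' + e *+ (n' - n) + e *+ n by rewrite E -addrA -mulrnDr subnK // ltnW.
  rewrite (cancelr Hint E2) addrC; apply: pideal; apply: pM; [by rewrite subn_gt0 | exact: pe].
- exfalso; apply: Ff'.
  have E2 : f' + e *+ n' = f + e *+ (n - n') + e *+ n' by rewrite -E -addrA -mulrnDr subnK // ltnW.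
  rewrite (cancelr Hint E2) addrC; apply: pideal; apply: pM; [by rewrite subn_gt0 | exact: pe].
by rewrite H in E; split => //; apply: (cancelr Hint E).
Qed.

Lemma Ne_face : face (nat_mults e).
Proof.
split; first split; first by exists 0%N; rewrite mulr0n.
  by move=> x y [a ->] [b ->]; exists (a + b)%N; rewrite mulrnDr.
move=> x y [n Hn].
have [f1 [a [Ff1 Ex]]] := dec_e x; have [f2 [b [Ff2 Ey]]] := dec_e y.
have E : f1 + f2 + e *+ (a + b) = 0 + e *+ n.
  by rewrite add0r -Hn Ex Ey mulrnDr addrACA.
have [H _] := uniq_e (Fsub Ff1 Ff2) p0 E.
have [f10 f20] := szero H.
by split; [exists a; rewrite Ex f10 add0r | exists b; rewrite Ey f20 add0r].
Qed.

Lemma rank_Ne : rank (nat_mults e) = 1%N.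
Proof.
apply/eqP; rewrite eqn_leq; apply/andP; split.
  apply: (rspan (h := fun _ : 'I_1 => e)) => x [n ->].
  exists 1%N, (fun _ => 0%N), (fun _ => n); split => //.
  by rewrite !big_ord1 mulr0n addr0 mulr1n.
rewrite -[1%N]/(0.+1)%N -{1}rank_zero.
apply: (rstrict zeroface (y := e)).
- by move=> x ->; exists 0%N; rewrite mulr0n.
- by exists 1%N.
exact: e0.
Qed.

Lemma notFI_Ne x : ~ FI x <-> nat_mults e x.
Proof.
split.
  move=> Gx; have [f [n [Ff Ex]]] := dec_e x.
  case: (classic (f = 0)) => [f0|f0]; first by exists n; rewrite Ex f0 add0r.
  by exfalso; apply: Gx; rewrite Ex; apply: FI_F.
move=> [n ->] /FI_iff [f [m [Ff f0 E]]].
have [f' [k [Ff' Em]]] := dec_e m.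
have E2 : f + f' + e *+ k = 0 + e *+ n by rewrite add0r E Em addrA.
have [H _] := uniq_e (Fsub Ff Ff') p0 E2.
by apply: f0; case: (szero H).
Qed.

Lemma FI_prime_e : prime_ideal FI.
Proof.
split; first by move=> x y; apply: FI_ideal.
have [[H0 HD] _] := Ne_face.
split; first by apply/notFI_Ne.
by move=> x y /notFI_Ne Hx /notFI_Ne Hy; apply/notFI_Ne; apply: HD.
Qed.

Lemma rank_G_e : rank (fun x => ~ FI x) = 1%N.
Proof. rewrite -rank_Ne; apply: rext => x; exact: notFI_Ne. Qed.

Lemma edge_Ne : edge (nat_mults e) /\ ~ subset_of (nat_mults e) F.
Proof.
split; first by split; [exact: Ne_face | exact: rank_Ne].
by move=> H; apply: (H e) => //; [exists 1%N | exact: pe].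
Qed.

Lemma edges_e E : edge E -> ~ subset_of E F -> same_set E (nat_mults e).
Proof.
move=> [FE rE] Hs.
have [x [Ex px]] : exists x, E x /\ p x.
  apply: NNPP => H; apply: Hs => x Ex px; apply: H; by exists x.
have [f [n [Ff Ex']]] := dec_e x.
have n0 : (0 < n)%N.
  by rewrite lt0n; apply/eqP => n0; apply: Ff; rewrite Ex' n0 mulr0n addr0 in px.
case: FE => [[E0 ED] ES].
have Ee : E e.
  have := ES _ _ (eq_ind _ E Ex _ Ex') => [[_]].
  by case: n n0 {Ex'} => // n _; rewrite mulrS => /ES [].
have NeE : forall y, nat_mults e y -> E y.
  move=> y [k ->]; apply: mul_face => //; by split.
move=> y; split; last exact: NeE.
move=> Ey; have [f1 [k [Ff1 Ey']]] := dec_e y.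
have Ef1 : E f1 by have := ES _ _ (eq_ind _ E Ey _ Ey') => [[]].
case: (classic (f1 = 0)) => [f10|f10]; first by exists k; rewrite Ey' f10 add0r.
exfalso.
have Hlt := rstrict Ne_face NeE Ef1.
have Hf1 : ~ nat_mults e f1.
  move=> [j Hj]; apply: f10; move: Hj.
  case: j => [|j]; first by rewrite mulr0n.
  by move=> Hj; exfalso; apply: Ff1; rewrite Hj; apply: pM => //; exact: pe.
by move: (Hlt Hf1); rewrite rank_Ne rE.
Qed.


Lemma e_d x : FI x <-> exists q : M -> Prop, [/\ prime_ideal q, height q = 1%N,
                                           ~ same_set q p & q x].
Proof.
split.
  move=> /FI_iff [f [m [Ff f0 Ex]]].
  have Hf : ~ nat_mults e f.
    move=> [j Hj]; apply: f0; move: Hj.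
    case: j => [|j]; first by rewrite mulr0n.
    by move=> Hj; exfalso; apply: Ff; rewrite Hj; apply: pM => //; exact: pe.
  have [Psi [FPsi SPsi NPf rPsi]] := facet_exists' Ne_face Hf.
  have [rk0 _] := rkF.
  have [Hq1 Hq2] := facet_prime FPsi rPsi rk0.
  exists (fun x => ~ Psi x); split => //.
    move=> Hsame; have := (Hsame e).2 pe; apply; apply: SPsi; by exists 1%N.
  rewrite Ex => HP; apply: NPf; case: FPsi => _ /(_ _ _ HP) []; done.
move=> [q [Hq hq Hne qx]].
have [f [n [Ff Ex]]] := dec_e x.
case: (classic (f = 0)) => [f0|f0]; last by rewrite Ex; apply: FI_F.
exfalso; apply: Hne.
have Fq := prime_face Hq.
have qe : q e.
  apply: NNPP => Hqe; move: qx; rewrite Ex f0 add0r.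
  exact: (@mul_face M (fun x => ~ q x) e n (proj1 Fq) Hqe).
have pq : forall y, p y -> q y.
  by move=> y /He [m ->]; case: Hq => Hi _; apply: Hi.
have qp : forall y, q y -> p y.
  move=> y qy; apply: NNPP => Fy.
  have Hlt := rstrict Fq (Gam := F) (y := y) (fun z Hz Hpz => Hz (pq _ Hpz)) Fy.
  have := Hlt (fun H => H qy).
  have := rmono (S := fun x => ~ q x) (T := fun _ => True) (fun _ _ => I).
  have [rk0 rF] := rkF; move: hq; rewrite /height rF /rk; lia.
by move=> y; split; [apply: qp | apply: pq].
Qed.

Lemma e_all : [/\ splits_off F, prime_ideal FI /\ (height FI >= rk M - 1)%N,
   prime_ideal FI /\ (forall E E' : M -> Prop, edge E -> ~ subset_of E F ->
                    edge E' -> ~ subset_of E' F -> same_set E E') &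
   (forall x : M, FI x <-> exists q : M -> Prop, [/\ prime_ideal q, height q = 1%N,
                                           ~ same_set q p & q x])].
Proof.
split.
- exists (nat_mults e); split; first exact: Ne_face.
  split; first by move=> x; have [f [n [Ff ->]]] := dec_e x; exists f, (e *+ n); split => //; exists n.
  move=> f k f' k' Ff [n ->] Ff' [n' ->] E; have [-> ->] := uniq_e Ff Ff' E; done.
- split; first exact: FI_prime_e.
  by rewrite /height rank_G_e.
- split; first exact: FI_prime_e.
  move=> E E' HE HsE HE' HsE' x; rewrite (edges_e HE HsE) (edges_e HE' HsE'); done.
exact: e_d.
Qed.

End Egen.


Definition Hcond := prime_ideal FI /\ (rank (fun x => ~ FI x) <= 1)%N.

Lemma b_H : prime_ideal FI /\ (height FI >= rk M - 1)%N -> Hcond.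
Proof.
move=> [FIp Hht]; split => //.
have := rmono (S := fun x => ~ FI x) (T := fun _ => True) (fun _ _ => I).
have [rk0 _] := rkF; move: Hht; rewrite /height /rk; lia.
Qed.

Lemma GL0 (G : M -> Prop) : face G -> (2 <= rank G)%N ->
  exists E1 E2 x1 x2, [/\ face E1 /\ face E2, (forall x, E1 x -> G x) /\ (forall x, E2 x -> G x),
   [/\ E1 x1, E2 x2, x1 <> 0, x2 <> 0 & forall x, E1 x -> E2 x -> x = 0] &
   rank E1 = 1%N /\ rank E2 = 1%N].
Proof.
move=> FG Hr.
have G0 : G 0 by case: FG => [[]].
have HzG : forall x : M, x = 0 -> G x by move=> x ->.
have Hr' : (rank (fun x : M => x = 0%R) + 2 <= rank G)%N by rewrite rank_zero.
have [E1 [E2 [[F1 S1 G1 [x1 [E1x1 Px1]] R1] [F2 S2 G2 [x2 [E2x2 Px2]] R2] Hin]]] :=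
  GL Hint Hg zeroface FG HzG Hr'.
exists E1, E2, x1, x2; split => //; split => //.
- move: R1; rewrite rank_zero => R1; have := rstrict zeroface S1 E1x1 Px1.
  rewrite rank_zero; lia.
- move: R2; rewrite rank_zero => R2; have := rstrict zeroface S2 E2x2 Px2.
  rewrite rank_zero; lia.
Qed.

Lemma c_H : prime_ideal FI /\ (forall E E' : M -> Prop, edge E -> ~ subset_of E F ->
                    edge E' -> ~ subset_of E' F -> same_set E E') -> Hcond.
Proof.
move=> [FIp Hed]; split => //; rewrite leqNgt; apply/negP => Hr.
have [E1 [E2 [x1 [x2 [[F1 F2] [G1 G2] [e1 e2 n1 n2 Hin] [r1 r2]]]]]] := GL0 (Gface FIp) Hr.
have nsub : forall E x, (forall y, E y -> ~ FI y) -> E x -> x <> 0 -> ~ subset_of E F.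
  by move=> E x GE Ex x0 Hs; apply: x0; apply: GF; [apply: GE | apply: Hs].
have := Hed E1 E2 (conj F1 r1) (nsub _ _ G1 e1 n1) (conj F2 r2) (nsub _ _ G2 e2 n2) x1.
by move=> [/(_ e1) H _]; apply: n1; apply: Hin.
Qed.

Lemma d_H : (forall x : M, FI x <-> exists q : M -> Prop, [/\ prime_ideal q, height q = 1%N,
                                           ~ same_set q p & q x]) -> Hcond.
Proof.
move=> Hd.
have FIp : prime_ideal FI.
  split; first by move=> x y; apply: FI_ideal.
  split.
    by move=> /Hd [q [[_ [Hq0 _]] _ _ q0]].
  move=> x y Hx Hy /Hd [q [Hq hq Hne qxy]].
  case: (classic (q x)) => qx; first by apply: Hx; apply/Hd; exists q.
  case: (classic (q y)) => qy; first by apply: Hy; apply/Hd; exists q.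
  by case: Hq => _ [_ HS]; apply: (HS _ _ qx qy).
split => //; rewrite leqNgt; apply/negP => Hr.
have [E1 [E2 [x1 [x2 [[F1 F2] [G1 G2] [e1 e2 n1 n2 Hin] [r1 r2]]]]]] := GL0 (Gface FIp) Hr.
have nE1 : ~ E1 x2 by move=> H; apply: n2; apply: Hin.
have [Psi [FPsi SPsi NPx2 rPsi]] := facet_exists' F1 nE1.
have [rk0 _] := rkF.
have [Hq1 Hq2] := facet_prime FPsi rPsi rk0.
apply: (G2 _ e2); apply/Hd; exists (fun x => ~ Psi x); split => //.
move=> Hsame; have px1 : p x1.
  apply: NNPP => Fx1; apply: n1; apply: GF => //; exact: G1.
by have := (Hsame x1).2 px1; apply; apply: SPsi.
Qed.

Lemma a_H : splits_off F -> Hcond.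
Proof.
move=> [K [FK [Hdec Huniq]]].
have [[K0 KD] KS] := FK.
have F0 : ~ p 0 := p0.
have KF : forall k, K k -> ~ p k -> k = 0.
  move=> k Kk Fk; have E : k + 0 = 0 + k by rewrite addr0 add0r.
  by have [] := Huniq _ _ _ _ Fk K0 F0 Kk E.
have notFI_K : forall x, ~ FI x <-> K x.
  move=> x; split.
    move=> Gx; have [f [k [Ff Kk Ex]]] := Hdec x.
    case: (classic (f = 0)) => [f0|f0]; first by rewrite Ex f0 add0r.
    by exfalso; apply: Gx; rewrite Ex; apply: FI_F.
  move=> Kx /FI_iff [f [m [Ff f0 E]]].
  have [f' [k' [Ff' Kk' Em]]] := Hdec m.
  have E2 : (f + f') + k' = 0 + x by rewrite add0r E Em addrA.
  have [H _] := Huniq _ _ _ _ (Fsub Ff Ff') Kk' F0 Kx E2.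
  by apply: f0; case: (szero H).
have FIp : prime_ideal FI.
  split; first by move=> x y; apply: FI_ideal.
  split; first by apply/notFI_K.
  by move=> x y /notFI_K Hx /notFI_K Hy; apply/notFI_K; apply: KD.
split => //; rewrite leqNgt; apply/negP => Hr.
rewrite (rext (T := K)) in Hr; last exact: notFI_K.
have [E1 [E2 [x1 [x2 [[F1 F2] [G1 G2] [e1 e2 n1 n2 Hin] [r1 r2]]]]]] := GL0 FK Hr.
pose Phi := fun x => exists f k, [/\ ~ p f, E1 k & x = f + k].
have [[E10 E1D] E1S] := F1.
have FPhi : face Phi.
  split; first split.
  - by exists 0, 0; rewrite addr0.
  - move=> x y [f [k [Ff Ek ->]]] [f' [k' [Ff' Ek' ->]]].
    exists (f + f'), (k + k'); split; [exact: Fsub | exact: E1D | by rewrite addrACA].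
  move=> x y [f [k [Ff Ek Exy]]].
  have [f1 [k1 [Ff1 Kk1 Ex]]] := Hdec x; have [f2 [k2 [Ff2 Kk2 Ey]]] := Hdec y.
  have E : (f1 + f2) + (k1 + k2) = f + k by rewrite -Exy Ex Ey addrACA.
  have [_ Hk] := Huniq _ _ _ _ (Fsub Ff1 Ff2) (KD _ _ Kk1 Kk2) Ff (G1 _ Ek) E.
  rewrite -Hk in Ek; have [Ek1 Ek2] := E1S _ _ Ek.
  by split; [exists f1, k1 | exists f2, k2].
have Hlt1 := rstrict FPhi (Gam := fun _ => True) (y := x2) (fun _ _ => I) I.
have Hlt2 := rstrict F_face (Gam := Phi) (y := x1)
   (fun x Fx => ex_intro _ x (ex_intro _ 0 (And3 Fx E10 (esym (addr0 x))))).
have Fx1 : ~ ~ p x1 by move=> Fx1; apply: n1; apply: KF => //; exact: G1.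
have Px1 : Phi x1 by exists 0, x1; rewrite add0r.
have nPx2 : ~ Phi x2.
  move=> [f [k [Ff Ek Ex2]]].
  have E : f + k = 0 + x2 by rewrite add0r Ex2.
  have [_ Hk] := Huniq _ _ _ _ Ff (G1 _ Ek) F0 (G2 _ e2) E.
  by apply: n2; apply: Hin => //; rewrite -Hk.
have := Hlt1 nPx2; have := Hlt2 Px1 Fx1.
have [rk0 rF] := rkF; rewrite rF /rk; lia.
Qed.


Lemma main_all :
  [<-> splits_off F;
       prime_ideal FI /\ (height FI >= rk M - 1)%N;
       prime_ideal FI /\
                 (forall E E' : M -> Prop, edge E -> ~ subset_of E F ->
                    edge E' -> ~ subset_of E' F -> same_set E E');
       (forall x : M, FI x <->
                   exists q : M -> Prop, [/\ prime_ideal q, height q = 1%N,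
                                           ~ same_set q p & q x]);
       exists e : M, forall x : M, p x <-> exists m : M, x = e + m]
  /\
  (forall e : M, (forall x : M, p x <-> exists m : M, x = e + m) ->
     [/\ (forall x : M, exists f n, F f /\ x = f + e *+ n),
         (forall (f f' : M) (n n' : nat), F f -> F f' ->
            f + e *+ n = f' + e *+ n' -> f = f' /\ n = n'),
         edge (nat_mults e) /\ ~ subset_of (nat_mults e) F
       & forall E : M -> Prop, edge E -> ~ subset_of E F ->
            same_set E (nat_mults e)]).
Proof.
have He_of : Hcond -> exists e, forall x, p x <-> exists m, x = e + m.
  by move=> [H1 H2]; apply: H_e.
split.
  tfae => [Ha|Hb|Hc|Hd|[e He]].
  - have [e He] := He_of (a_H Ha); by case: (e_all He).
  - have [e He] := He_of (b_H Hb); by case: (e_all He).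
  - have [e He] := He_of (c_H Hc); by case: (e_all He).
  - exact: He_of (d_H Hd).
  - by case: (e_all He).
move=> e He; split.
- exact: dec_e He.
- move=> f f' n n' Ff Ff' E; exact: (uniq_e He Ff Ff' E).
- exact: edge_Ne He.
- move=> E HE HsE; exact: (edges_e He HE HsE).
Qed.

End Main.

Local Open Scope ring_scope.

Theorem lemma2p2 (M : nmodType) (p : M -> Prop) :
  toric_monoid M -> sharp_monoid M ->
  prime_ideal p -> height p = 1%N ->
  let F := fun x : M => ~ p x in
  let FI := gen_ideal (face_plus F) in
  [<-> (* (a) *) splits_off F;
       (* (b) *) prime_ideal FI /\ (height FI >= rk M - 1)%N;
       (* (c) *) prime_ideal FI /\
                 (forall E E' : M -> Prop, edge E -> ~ subset_of E F ->
                    edge E' -> ~ subset_of E' F -> same_set E E');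
       (* (d) *) (forall x : M, FI x <->
                   exists q : M -> Prop, [/\ prime_ideal q, height q = 1%N,
                                           ~ same_set q p & q x]);
       (* (e) *) exists e : M, forall x : M, p x <-> exists m : M, x = e + m]
  /\
  (forall e : M, (forall x : M, p x <-> exists m : M, x = e + m) ->
     [/\ (forall x : M, exists f n, F f /\ x = f + e *+ n),
         (forall (f f' : M) (n n' : nat), F f -> F f' ->
            f + e *+ n = f' + e *+ n' -> f = f' /\ n = n'),
         edge (nat_mults e) /\ ~ subset_of (nat_mults e) F
       & forall E : M -> Prop, edge E -> ~ subset_of E F ->
            same_set E (nat_mults e)]).
Proof.
move=> [[Hint [N0 [g Hg]]] Hsat _] Hsh Hp Hh F FI.
exact: (main_all Hint Hsh Hsat Hg Hp Hh).
Qed.
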